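(* Let $\Sigma^2\subset\widetilde{\mathbb{C}}$ be a domain with para-complex coordinate $z=u+jv$, let $(F,G)=(f^1+jf^2,\,g^1+jg^2):\Sigma^2\to\widetilde{\mathbb{C}}^2$ be para-holomorphic, and let $\psi:\Sigma^2\to\mathbb{R}^3$ be the indefinite generalized IA-map \[ \psi=\Bigl(f^1-g^1,\ f^2+g^2,\ -\int\bigl\{(f^1+g^1)(f^1_u-g^1_u)+(-f^2+g^2)(f^2_u+g^2_u)\bigr\}du+\bigl\{(f^1+g^1)(f^2_u-g^2_u)+(-f^2+g^2)(f^1_u+g^1_u)\bigr\}dv\Bigr). \] Then $p\in\Sigma^2$ is a singular point of $\psi$ (i.e. $\psi$ is not immersive at $p$) if and only if $|dF|=|dG|$ at $p$, i.e. $(f^1_u)^2-(f^2_u)^2=(g^1_u)^2-(g^2_u)^2$ at $p$.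
   Context: $\widetilde{\mathbb{C}}=\{a+jb\}$ with $j^2=1$, $|u+jv|=u^2-v^2$. $F=f^1+jf^2$ is para-holomorphic if $f^1_u=f^2_v$, $f^1_v=f^2_u$; $|dF|$ denotes $|F'|$ with $F'=f^1_u+jf^2_u$. The third component is a locally defined primitive of a closed $1$-form. *)

(* Defs.v *)
(* Points of the para-complex plane
   z = u + j v are identified with (u, v) in R^2. *)
From Stdlib Require Import Reals.
From Coquelicot Require Import Coquelicot.
Open Scope R_scope.

Definition pu (f : R -> R -> R) (u v : R) : R := Derive (fun t => f t v) u.
Definition pv (f : R -> R -> R) (u v : R) : R := Derive (fun t => f u t) v.

Definition open2 (D : R -> R -> Prop) : Prop :=
  open (fun x : R * R => D (fst x) (snd x)).
Definition connected2 (D : R -> R -> Prop) : Prop :=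
  forall U V : R * R -> Prop, open U -> open V ->
    (forall u v, D u v -> U (u, v) \/ V (u, v)) ->
    (forall u v, D u v -> U (u, v) -> V (u, v) -> False) ->
    (exists u v, D u v /\ U (u, v)) -> (exists u v, D u v /\ V (u, v)) -> False.
Definition domain2 (D : R -> R -> Prop) : Prop :=
  (exists u v, D u v) /\ open2 D /\ connected2 D.

Definition C1_on (D : R -> R -> Prop) (f : R -> R -> R) : Prop :=
  forall u v, D u v ->
    ex_derive (fun t => f t v) u /\ ex_derive (fun t => f u t) v /\
    continuous (fun x : R * R => pu f (fst x) (snd x)) (u, v) /\
    continuous (fun x : R * R => pv f (fst x) (snd x)) (u, v).

Definition para_holomorphic (D : R -> R -> Prop) (f1 f2 : R -> R -> R) : Prop :=
  C1_on D f1 /\ C1_on D f2 /\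
  forall u v, D u v -> pu f1 u v = pv f2 u v /\ pv f1 u v = pu f2 u v.

(* |w| = a^2 - b^2 for w = a + j b, and |dF| = |F'| with F' = f1_u + j f2_u *)
Definition pnorm (a b : R) : R := a ^ 2 - b ^ 2.
Definition abs_dF (f1 f2 : R -> R -> R) (u v : R) : R :=
  pnorm (pu f1 u v) (pu f2 u v).

Definition immersive_at (X Y Z : R -> R -> R) (u v : R) : Prop :=
  forall a b : R,
    a * pu X u v + b * pv X u v = 0 ->
    a * pu Y u v + b * pv Y u v = 0 ->
    a * pu Z u v + b * pv Z u v = 0 ->
    a = 0 /\ b = 0.

Definition IA_third_component (D : R -> R -> Prop) (f1 f2 g1 g2 h : R -> R -> R)
  : Prop :=
  forall u v, D u v ->
    ex_derive (fun t => h t v) u /\ ex_derive (fun t => h u t) v /\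
    pu h u v = - ((f1 u v + g1 u v) * (pu f1 u v - pu g1 u v)
                  + (- f2 u v + g2 u v) * (pu f2 u v + pu g2 u v)) /\
    pv h u v = - ((f1 u v + g1 u v) * (pu f2 u v - pu g2 u v)
                  + (- f2 u v + g2 u v) * (pu f1 u v + pu g1 u v)).

(* Main.v *)
Require Import Defs.
From Stdlib Require Import Reals Lra.
From Coquelicot Require Import Coquelicot.
Open Scope R_scope.

Lemma alg (a b c d P Q : R) :
  ~ (forall x y : R,
      x * (a - c) + y * (b - d) = 0 ->
      x * (b + d) + y * (a + c) = 0 ->
      x * (- (P * (a - c) + Q * (b + d))) + y * (- (P * (b - d) + Q * (a + c))) = 0 ->
      x = 0 /\ y = 0)
  <-> a ^ 2 - b ^ 2 = c ^ 2 - d ^ 2.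
Proof.
  split.
  - intros H. destruct (Req_dec (a ^ 2 - b ^ 2) (c ^ 2 - d ^ 2)) as [E|E]; [exact E|].
    exfalso; apply H; intros x y H1 H2 H3.
    assert (Hx : x * ((a ^ 2 - b ^ 2) - (c ^ 2 - d ^ 2)) = 0).
    { replace (x * ((a ^ 2 - b ^ 2) - (c ^ 2 - d ^ 2))) with
        ((a + c) * (x * (a - c) + y * (b - d)) - (b - d) * (x * (b + d) + y * (a + c))) by ring.
      rewrite H1, H2; ring. }
    assert (Hy : y * ((a ^ 2 - b ^ 2) - (c ^ 2 - d ^ 2)) = 0).
    { replace (y * ((a ^ 2 - b ^ 2) - (c ^ 2 - d ^ 2))) with
        ((a - c) * (x * (b + d) + y * (a + c)) - (b + d) * (x * (a - c) + y * (b - d))) by ring.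
      rewrite H1, H2; ring. }
    apply Rmult_integral in Hx; apply Rmult_integral in Hy.
    split; [destruct Hx|destruct Hy]; auto; lra.
  - intros E H.
    assert (K : forall x y, x * (a - c) + y * (b - d) = 0 -> x * (b + d) + y * (a + c) = 0 ->
               x = 0 /\ y = 0).
    { intros x y e1 e2. apply H; auto.
      replace (x * (- (P * (a - c) + Q * (b + d))) + y * (- (P * (b - d) + Q * (a + c))))
        with (- (P * (x * (a - c) + y * (b - d)) + Q * (x * (b + d) + y * (a + c)))) by ring.
      rewrite e1, e2; ring. }
    destruct (Req_dec (a + c) 0) as [e1|e1].
    + destruct (Req_dec (b + d) 0) as [e2|e2].
      * destruct (Req_dec (b - d) 0) as [e3|e3].
        -- destruct (Req_dec (a - c) 0) as [e4|e4].
           ++ destruct (K 1 0); [rewrite e4, e3; ring|rewrite e2, e1; ring|lra].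
           ++ destruct (K (b - d) (- (a - c))); [ring|nra|lra].
        -- destruct (K (b - d) (- (a - c))); [ring|nra|lra].
      * destruct (K (a + c) (- (b + d))); [nra|ring|lra].
    + destruct (K (a + c) (- (b + d))); [nra|ring|lra].
Qed.

Theorem mainTheorem4
  (D : R -> R -> Prop) (f1 f2 g1 g2 h : R -> R -> R)
  (HD : domain2 D)
  (HF : para_holomorphic D f1 f2) (HG : para_holomorphic D g1 g2)
  (Hh : IA_third_component D f1 f2 g1 g2 h)
  (u v : R) (Hp : D u v) :
  ~ immersive_at (fun s t => f1 s t - g1 s t) (fun s t => f2 s t + g2 s t) h u v
  <-> abs_dF f1 f2 u v = abs_dF g1 g2 u v.
Proof.
  destruct HF as [C1 [C2 CR]]. destruct HG as [D1 [D2 DR]].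
  destruct (C1 u v Hp) as [a1 [a2 _]]. destruct (C2 u v Hp) as [b1 [b2 _]].
  destruct (D1 u v Hp) as [c1 [c2 _]]. destruct (D2 u v Hp) as [d1 [d2 _]].
  destruct (CR u v Hp) as [r1 r2]. destruct (DR u v Hp) as [s1 s2].
  destruct (Hh u v Hp) as [_ [_ [hu hv]]].
  unfold immersive_at, abs_dF, pnorm.
  assert (Xu : pu (fun s t => f1 s t - g1 s t) u v = pu f1 u v - pu g1 u v).
  { unfold pu. apply Derive_minus; assumption. }
  assert (Xv : pv (fun s t => f1 s t - g1 s t) u v = pu f2 u v - pu g2 u v).
  { assert (T : pv (fun s t => f1 s t - g1 s t) u v = pv f1 u v - pv g1 u v) by (unfold pv; apply Derive_minus; assumption). lra. }
  assert (Yu : pu (fun s t => f2 s t + g2 s t) u v = pu f2 u v + pu g2 u v).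
  { unfold pu. apply Derive_plus; assumption. }
  assert (Yv : pv (fun s t => f2 s t + g2 s t) u v = pu f1 u v + pu g1 u v).
  { assert (T : pv (fun s t => f2 s t + g2 s t) u v = pv f2 u v + pv g2 u v) by (unfold pv; apply Derive_plus; assumption). lra. }
  rewrite Xu, Xv, Yu, Yv, hu, hv.
  apply (alg _ _ _ _ (f1 u v + g1 u v) (- f2 u v + g2 u v)).
Qed.
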